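(* For any complex numbers $a,b,\alpha,\beta,\theta$ with $\beta a-\alpha b\neq0$ and any natural number $n\ge1$, \[ \sum_{r=0}^{\lfloor n/2\rfloor}\Psi\left(\begin{array}{cc|c} a & b & n \\ \alpha & \beta & r \end{array}\right)\theta^r=\Psi(a-\alpha\theta,b-\beta\theta,n),\qquad \sum_{r=0}^{\lfloor (n-1)/2\rfloor}\Phi\left(\begin{array}{cc|c} a & b & n \\ \alpha & \beta & r \end{array}\right)\theta^r=\Phi(a-\alpha\theta,b-\beta\theta,n). \]
   Context: $\delta(m)=1$ for $m$ odd, $0$ for $m$ even; $\lfloor\cdot\rfloor$ is the floor. $\Psi(a,b,n)$, $\Phi(a,b,n)$ are defined by $\Psi(a,b,0)=2$, $\Psi(a,b,1)=1$, $\Psi(a,b,n+1)=(2a-b)^{\delta(n)}\Psi(a,b,n)-a\Psi(a,b,n-1)$ and $\Phi(a,b,0)=0$, $\Phi(a,b,1)=1$, $\Phi(a,b,n+1)=(2a-b)^{\delta(n+1)}\Phi(a,b,n)-a\Phi(a,b,n-1)$. For $n\ge1$ and numbers with $\beta a-\alpha b\ne0$, $\Psi\left(\begin{array}{cc|c} a & b & n \\ \alpha & \beta & r \end{array}\right)$ ($0\le r\le\lfloor n/2\rfloor$) and $\Phi\left(\begin{array}{cc|c} a & b & n \\ \alpha & \beta & r \end{array}\right)$ ($0\le r\le\lfloor (n-1)/2\rfloor$) are the unique numbers such that, identically in $x,y$, $(\beta a-\alpha b)^{\lfloor n/2\rfloor}\frac{x^n+y^n}{(x+y)^{\delta(n)}}=\sum_{r}\Psi\left(\begin{array}{cc|c}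 a & b & n \\ \alpha & \beta & r \end{array}\right)(\alpha x^2+\beta xy+\alpha y^2)^{\lfloor n/2\rfloor-r}(ax^2+bxy+ay^2)^r$ and $(\beta a-\alpha b)^{\lfloor (n-1)/2\rfloor}\frac{x^n-y^n}{(x-y)(x+y)^{\delta(n-1)}}=\sum_{r}\Phi\left(\begin{array}{cc|c} a & b & n \\ \alpha & \beta & r \end{array}\right)(\alpha x^2+\beta xy+\alpha y^2)^{\lfloor (n-1)/2\rfloor-r}(ax^2+bxy+ay^2)^r$. *)

(* Defs.v *)
(* Complex numbers are modelled as  R[i]  (complex.v of
   mathcomp-real-closed) for an arbitrary  R : realType  (a model of the reals),
   i.e. R[i] is (a copy of) the field C of complex numbers. *)
From mathcomp Require Import all_boot all_algebra.
From mathcomp Require Export complex.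
From mathcomp Require Export reals.
Set Implicit Arguments. Unset Strict Implicit. Unset Printing Implicit Defensive.
Import GRing.Theory Num.Theory.
Local Open Scope ring_scope.

Section Seqs.
Variable F : fieldType.

Definition delta (m : nat) : nat := odd m.

(* psi_pair a b n = (Psi(a,b,n), Psi(a,b,n+1)) *)
Fixpoint psi_pair (a b : F) (n : nat) : F * F :=
  match n with
  | 0 => (2, 1)
  | m.+1 => let: (p, q) := psi_pair a b m in
            (q, (2 * a - b) ^+ delta m.+1 * q - a * p)
  end.
Definition Psi (a b : F) (n : nat) : F := (psi_pair a b n).1.

(* phi_pair a b n = (Phi(a,b,n), Phi(a,b,n+1)) *)
Fixpoint phi_pair (a b : F) (n : nat) : F * F :=
  match n with
  | 0 => (0, 1)
  | m.+1 => let: (p, q) := phi_pair a b m in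
            (q, (2 * a - b) ^+ delta m.+2 * q - a * p)
  end.
Definition Phi (a b : F) (n : nat) : F := (phi_pair a b n).1.

(* c : nat -> F are the coefficients Psi( a b | n ; alpha beta | r ),
   0 <= r <= floor(n/2): the defining identity, identically in x, y
   (wherever the left-hand side is defined, i.e. (x+y)^delta(n) <> 0). *)
Definition is_Psi_coefs (a b al be : F) (n : nat) (c : nat -> F) : Prop :=
  forall x y : F, (x + y) ^+ delta n != 0 ->
    (be * a - al * b) ^+ n./2 * ((x ^+ n + y ^+ n) / (x + y) ^+ delta n)
    = \sum_(r < n./2.+1)
        c r * (al * x ^+ 2 + be * x * y + al * y ^+ 2) ^+ (n./2 - r)
            * (a * x ^+ 2 + b * x * y + a * y ^+ 2) ^+ r.

(* the same for Phi( a b | n ; alpha beta | r ), 0 <= r <= floor((n-1)/2),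
   identity required wherever (x-y)(x+y)^delta(n-1) <> 0. *)
Definition is_Phi_coefs (a b al be : F) (n : nat) (c : nat -> F) : Prop :=
  forall x y : F, (x - y) * (x + y) ^+ delta n.-1 != 0 ->
    (be * a - al * b) ^+ (n.-1)./2
      * ((x ^+ n - y ^+ n) / ((x - y) * (x + y) ^+ delta n.-1))
    = \sum_(r < (n.-1)./2.+1)
        c r * (al * x ^+ 2 + be * x * y + al * y ^+ 2) ^+ ((n.-1)./2 - r)
            * (a * x ^+ 2 + b * x * y + a * y ^+ 2) ^+ r.
End Seqs.

(* Main.v *)
Require Import Defs.
From mathcomp Require Import all_boot all_algebra.
From mathcomp Require Import complex reals.
From mathcomp Require Import ring lra zify.
Import GRing.Theory Num.Theory.
Local Open Scope ring_scope.

Section Gen.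
Variable F : fieldType.
Implicit Types (a b x y u v : F).

Lemma PsiSS a b n : Psi a b n.+2 = (2*a-b)^+delta n.+1 * Psi a b n.+1 - a * Psi a b n.
Proof. by rewrite /Psi /=; case: (psi_pair a b n). Qed.

Lemma PhiSS a b n : Phi a b n.+2 = (2*a-b)^+delta n.+2 * Phi a b n.+1 - a * Phi a b n.
Proof. by rewrite /Phi /=; case: (phi_pair a b n). Qed.

Lemma Psi_xy x y n : (x+y)^+ odd n * Psi (x*y) (2*(x*y) - (x+y)^+2) n = x^+n + y^+n.
Proof.
suff: (x+y)^+ odd n * Psi (x*y) (2*(x*y) - (x+y)^+2) n = x^+n + y^+n /\
  (x+y)^+ odd n.+1 * Psi (x*y) (2*(x*y) - (x+y)^+2) n.+1 = x^+n.+1 + y^+n.+1 by case.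
elim: n => [|n [IH1 IH2]]; first by split; rewrite /Psi /=; ring.
split => //; rewrite PsiSS.
move: IH1 IH2; rewrite /delta /=; case: (odd n) => /= IH1 IH2.
- apply: (@eq_trans _ _ ((x+y)*(x^+n.+1+y^+n.+1) - x*y*(x^+n+y^+n))); last by rewrite !exprS; ring.
  rewrite -IH1 -IH2; ring.
- apply: (@eq_trans _ _ ((x+y)*(x^+n.+1+y^+n.+1) - x*y*(x^+n+y^+n))); last by rewrite !exprS; ring.
  rewrite -IH1 -IH2; ring.
Qed.

Lemma Phi_xy x y n : (x-y) * (x+y)^+ (~~ odd n) * Phi (x*y) (2*(x*y) - (x+y)^+2) n = x^+n - y^+n.
Proof.
suff: (x-y) * (x+y)^+ (~~ odd n) * Phi (x*y) (2*(x*y) - (x+y)^+2) n = x^+n - y^+n /\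
  (x-y) * (x+y)^+ (~~ odd n.+1) * Phi (x*y) (2*(x*y) - (x+y)^+2) n.+1 = x^+n.+1 - y^+n.+1 by case.
elim: n => [|n [IH1 IH2]]; first by split; rewrite /Phi /=; ring.
split => //; rewrite PhiSS.
move: IH1 IH2; rewrite /delta /=; case: (odd n) => /= IH1 IH2.
- apply: (@eq_trans _ _ ((x+y)*(x^+n.+1-y^+n.+1) - x*y*(x^+n-y^+n))); last by rewrite !exprS; ring.
  rewrite -IH1 -IH2; ring.
- apply: (@eq_trans _ _ ((x+y)*(x^+n.+1-y^+n.+1) - x*y*(x^+n-y^+n))); last by rewrite !exprS; ring.
  rewrite -IH1 -IH2; ring.
Qed.

Definition hform m (c : nat -> F) u v := \sum_(r < m.+1) c r * u ^+ (m - r) * v ^+ r.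

Lemma hform_sub m c d u v : hform m c u v - hform m d u v = hform m (fun r => c r - d r) u v.
Proof. by rewrite /hform -sumrB; apply: eq_bigr => i _; rewrite !mulrBl. Qed.

Lemma hform_lin m c l0 l1 u v : (l0 * u + l1 * v) * hform m c u v =
  hform m.+1 (fun r => l0 * (if (r <= m)%N then c r else 0) + l1 * (if r is r'.+1 then c r' else 0)) u v.
Proof.
rewrite /hform.
rewrite (eq_bigr (fun r : 'I_m.+2 => l0 * ((if (r <= m)%N then c r else 0) * u ^+ (m.+1 - r) * v ^+ r)
   + l1 * ((if (r : nat) is r'.+1 then c r' else 0) * u ^+ (m.+1 - r) * v ^+ r))); last first.
  by move=> i _; ring.
rewrite big_split /= [X in _ = X + _]big_ord_recr [X in _ = _ + X]big_ord_recl /= ltnn.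
rewrite !mul0r !mulr0 ?addr0 ?add0r.
rewrite mulrDl !mulr_sumr; congr (_ + _); apply: eq_bigr => i _.
- have hi : (i <= m)%N by rewrite -ltnS.
  rewrite hi subSn // exprS; ring.
- rewrite /bump leq0n add1n add0n subSS exprS; ring.
Qed.


Lemma Psi_hform a b al be n : exists c, forall u v,
  Psi (u*a - v*al) (u*b - v*be) n = hform n./2 c u v.
Proof.
suff: (exists c, forall u v, Psi (u*a - v*al) (u*b - v*be) n = hform n./2 c u v) /\
      (exists c, forall u v, Psi (u*a - v*al) (u*b - v*be) n.+1 = hform n.+1./2 c u v) by case.
elim: n => [|n [[c0 H0] [c1 H1]]].
  split; [exists (fun _ => 2) | exists (fun _ => 1)] => u v;
  by rewrite /hform big_ord1 /Psi /=; ring.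
split; first by exists c1.
have eA : forall u v, u*a - v*al = a * u + (-al) * v by move=> u v; ring.
have eL : forall u v, 2*(u*a - v*al) - (u*b - v*be) = (2*a-b) * u + (-(2*al-be)) * v
  by move=> u v; ring.
move: H1; rewrite /= uphalf_half /delta /=; case ho: (odd n) => /= H1.
- eexists => u v; rewrite PsiSS /delta /= ho /= expr0 mul1r H1 add1n H0 eA hform_lin hform_sub; reflexivity.
- eexists => u v; rewrite PsiSS /delta /= ho /= expr1 eL H1 H0 eA !hform_lin hform_sub; reflexivity.
Qed.

Lemma Phi_hform a b al be n : exists c, forall u v,
  Phi (u*a - v*al) (u*b - v*be) n = hform (n.-1)./2 c u v.
Proof.
suff: (exists c, forall u v, Phi (u*a - v*al) (u*b - v*be) n = hform (n.-1)./2 c u v) /\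
      (exists c, forall u v, Phi (u*a - v*al) (u*b - v*be) n.+1 = hform n./2 c u v) by case.
elim: n => [|n [[c0 H0] [c1 H1]]].
  split; [exists (fun _ => 0) | exists (fun _ => 1)] => u v;
  by rewrite /hform big_ord1 /Phi /=; ring.
split; first by exists c1.
have eA : forall u v, u*a - v*al = a * u + (-al) * v by move=> u v; ring.
have eL : forall u v, 2*(u*a - v*al) - (u*b - v*be) = (2*a-b) * u + (-(2*al-be)) * v
  by move=> u v; ring.
case: n H0 H1 => [|n] H0 H1.
  exists (fun _ => 1) => u v; rewrite /hform big_ord1 /Phi /=; ring.
move: H0 H1; rewrite /= uphalf_half /delta /=; case ho: (odd n) => /= H0 H1.
- eexists => u v; rewrite PhiSS /delta /= ho /= expr0 mul1r H1 add1n H0 eA hform_lin hform_sub; reflexivity.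
- eexists => u v; rewrite PhiSS /delta /= ho /= expr1 eL H1 H0 eA !hform_lin hform_sub; reflexivity.
Qed.

End Gen.
Arguments hform {F}.
Arguments Psi_hform {F}.
Arguments Phi_hform {F}.
Arguments Psi_xy {F}.
Arguments Phi_xy {F}.
Arguments hform_sub {F}.
Section Cplx.
Variable C : numClosedFieldType.

Lemma poly_all0 (q : {poly C}) : (forall t, q.[t] = 0) -> q = 0.
Proof.
move=> H; apply/eqP; apply/negPn/negP => nz.
have h1 : all (root q) [seq i%:R | i <- iota 0 (size q)].
  by apply/allP => t _; rewrite /root H.
have h2 : uniq [seq (i%:R : C) | i <- iota 0 (size q)].
  rewrite map_inj_uniq ?iota_uniq //.
  by move=> i j /eqP; rewrite eqr_nat => /eqP.
by have := max_poly_roots nz h1 h2; rewrite size_map size_iota ltnn.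
Qed.

Lemma uniq_coefs (a b al be : C) m (e : nat -> C) :
  be*a - al*b != 0 ->
  (forall x y, x + y != 0 -> x - y != 0 ->
     hform m e (al*x^+2 + be*x*y + al*y^+2) (a*x^+2 + b*x*y + a*y^+2) = 0) ->
  forall r, (r < m.+1)%N -> e r = 0.
Proof.
move=> hD H.
set q := \poly_(i < m.+1) e i.
set g1 := (2*a-b)%:P - (2*al-be) *: 'X.
set g2 := (2*a+b)%:P - (2*al+be) *: 'X.
have two0 : (2 : C) != 0 by rewrite pnatr_eq0.
have four0 : (4 : C) != 0 by rewrite pnatr_eq0.
have g1nz : g1 != 0.
  apply: contra hD => /eqP h.
  have -> : be*a - al*b = al * g1.[0] - a * (g1.[0] - g1.[1]) by rewrite /g1 !hornerE; ring.
  by rewrite h !horner0 !(subrr, mulr0).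
have g2nz : g2 != 0.
  apply: contra hD => /eqP h.
  have -> : be*a - al*b = a * (g2.[0] - g2.[1]) - al * g2.[0] by rewrite /g2 !hornerE; ring.
  by rewrite h !horner0 !(subrr, mulr0).
have key : q * g1 * g2 = 0.
  apply: poly_all0 => t; rewrite !hornerM.
  have [->|h1] := eqVneq g1.[t] 0; first by rewrite mulr0 mul0r.
  have [->|h2] := eqVneq g2.[t] 0; first by rewrite mulr0.
  suff -> : q.[t] = 0 by rewrite !mul0r.
  have hg1 : g1.[t] = 2*a - b - (2*al - be)*t.
    by rewrite /g1 hornerD hornerN hornerC hornerZ hornerX.
  have hg2 : g2.[t] = 2*a + b - (2*al + be)*t.
    by rewrite /g2 hornerD hornerN hornerC hornerZ hornerX.
  set s := sqrtC g1.[t]; set d := sqrtC (- g2.[t]).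
  have hs : s ^+ 2 = g1.[t] by rewrite sqrtCK.
  have hd : d ^+ 2 = - g2.[t] by rewrite sqrtCK.
  have snz : s != 0 by apply: contra h1 => /eqP h; rewrite -hs h expr0n.
  have dnz : d != 0 by apply: contra h2 => /eqP h; rewrite -oppr_eq0 -hd h expr0n.
  have := H ((s+d)/2) ((s-d)/2).
  have -> : (s+d)/2 + (s-d)/2 = s by field.
  have -> : (s+d)/2 - (s-d)/2 = d by field.
  move=> /(_ snz dnz).
  have -> : al*((s+d)/2)^+2 + be*((s+d)/2)*((s-d)/2) + al*((s-d)/2)^+2
     = al*((s^+2 + d^+2)/2) + be*((s^+2 - d^+2)/4) by field.
  have -> : a*((s+d)/2)^+2 + b*((s+d)/2)*((s-d)/2) + a*((s-d)/2)^+2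
     = a*((s^+2 + d^+2)/2) + b*((s^+2 - d^+2)/4) by field.
  have -> : al*((s^+2 + d^+2)/2) + be*((s^+2 - d^+2)/4) = be*a - al*b.
    by rewrite hs hd hg1 hg2; field.
  have -> : a*((s^+2 + d^+2)/2) + b*((s^+2 - d^+2)/4) = t * (be*a - al*b).
    by rewrite hs hd hg1 hg2; field.
  have -> : hform m e (be*a - al*b) (t * (be*a - al*b)) = (be*a-al*b)^+m * q.[t].
    rewrite /q horner_poly /hform mulr_sumr; apply: eq_bigr => r _.
    have hr : (r <= m)%N by rewrite -ltnS.
    have -> : (be*a-al*b)^+m = (be*a-al*b)^+(m-r) * (be*a-al*b)^+r by rewrite -exprD subnK.
    rewrite exprMn; ring.
  by move/eqP; rewrite mulf_eq0 expf_eq0 (negbTE hD) andbF /= => /eqP.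
move: key => /eqP; rewrite !mulf_eq0 (negbTE g1nz) (negbTE g2nz) !orbF => /eqP hq r hr.
by have := congr1 (fun p : {poly C} => p`_r) hq; rewrite coef_poly hr coef0.
Qed.

End Cplx.

Local Open Scope complex_scope.

Theorem theorem10p1 (R : realType) (a b al be th : R[i]) (n : nat) :
  be * a - al * b != 0 -> (1 <= n)%N ->
  ((exists c : nat -> R[i], is_Psi_coefs a b al be n c) /\
   (forall c : nat -> R[i], is_Psi_coefs a b al be n c ->
      \sum_(r < n./2.+1) c r * th ^+ r = Psi (a - al * th) (b - be * th) n)) /\
  ((exists c : nat -> R[i], is_Phi_coefs a b al be n c) /\
   (forall c : nat -> R[i], is_Phi_coefs a b al be n c ->
      \sum_(r < (n.-1)./2.+1) c r * th ^+ r = Phi (a - al * th) (b - be * th) n)).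
Proof.
move=> hD hn.
set D := be * a - al * b.
have gen : forall m (c : nat -> R[i]) (Q : R[i] -> R[i] -> R[i]) x y,
  (forall u v, Q u v = hform m c u v) -> forall u v,
   D * u = al*x^+2 + be*x*y + al*y^+2 -> D * v = a*x^+2 + b*x*y + a*y^+2 ->
   D^+m * Q u v = \sum_(r < m.+1) c r * (al*x^+2 + be*x*y + al*y^+2)^+(m - r) * (a*x^+2 + b*x*y + a*y^+2)^+r.
  move=> m c Q x y HQ u v <- <-; rewrite (HQ u v) /hform mulr_sumr; apply: eq_bigr => r _.
  have hr : (r <= m)%N by rewrite -ltnS.
  have -> : D^+m = D^+(m-r) * D^+r by rewrite -exprD subnK.
  rewrite !exprMn; ring.
have uv : forall x y : R[i], let u := (al*x^+2 + be*x*y + al*y^+2) / D in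
                   let v := (a*x^+2 + b*x*y + a*y^+2) / D in
   [/\ x*y = u*a - v*al, 2*(x*y) - (x+y)^+2 = u*b - v*be,
       D * u = al*x^+2 + be*x*y + al*y^+2 & D * v = a*x^+2 + b*x*y + a*y^+2].
  move=> x y u v; split; rewrite /u /v /D; field; exact: hD.
split.
  have [c Hc] := Psi_hform a b al be n.
  have Hid : is_Psi_coefs a b al be n c.
    move=> x y hs.
    have [e1 e2 e3 e4] := uv x y.
    have -> : (x^+n + y^+n) / (x+y)^+delta n = Psi (x*y) (2*(x*y) - (x+y)^+2) n.
      by rewrite -(Psi_xy x y n) /delta mulrAC divff // mul1r.
    rewrite e2 e1.
    exact: (gen _ _ _ x y Hc _ _ e3 e4).
  split; first by exists c.
  move=> c' Hc'.
  have ez := @uniq_coefs _ a b al be n./2 (fun r => c r - c' r) hD.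
  have ez' : forall r, (r < n./2.+1)%N -> c' r = c r.
    move=> r hr; apply/esym/eqP; rewrite -subr_eq0; apply/eqP; apply: ez => // x y hxy _.
    have hs : (x + y) ^+ delta n != 0 by rewrite expf_neq0.
    by rewrite -hform_sub /hform -(Hc' x y hs) -(Hid x y hs) subrr.
  rewrite (eq_bigr (fun r : 'I_n./2.+1 => c r * 1 ^+ (n./2 - r) * th ^+ r)); last first.
    by move=> r _; rewrite ez' // expr1n mulr1.
  by rewrite -/(hform n./2 c 1 th) -Hc !mul1r [th * al]mulrC [th * be]mulrC.
have hdn : delta n.-1 = ~~ odd n by case: n hn => //= n' _; rewrite /delta negbK.
have [c Hc] := Phi_hform a b al be n.
have Hid : is_Phi_coefs a b al be n c.
  move=> x y hs.
  have [e1 e2 e3 e4] := uv x y.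
  have -> : (x^+n - y^+n) / ((x-y) * (x+y)^+delta n.-1) = Phi (x*y) (2*(x*y) - (x+y)^+2) n.
    by rewrite -(Phi_xy x y n) hdn [_ * Phi _ _ _]mulrC mulfK // -hdn.
  rewrite e2 e1.
  exact: (gen _ _ _ x y Hc _ _ e3 e4).
split; first by exists c.
move=> c' Hc'.
have ez := @uniq_coefs _ a b al be (n.-1)./2 (fun r => c r - c' r) hD.
have ez' : forall r, (r < (n.-1)./2.+1)%N -> c' r = c r.
  move=> r hr; apply/esym/eqP; rewrite -subr_eq0; apply/eqP; apply: ez => // x y hxy hxy'.
  have hs : (x - y) * (x + y) ^+ delta n.-1 != 0 by rewrite mulf_neq0 // expf_neq0.
  by rewrite -hform_sub /hform -(Hc' x y hs) -(Hid x y hs) subrr.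
rewrite (eq_bigr (fun r : 'I_(n.-1)./2.+1 => c r * 1 ^+ ((n.-1)./2 - r) * th ^+ r)); last first.
  by move=> r _; rewrite ez' // expr1n mulr1.
by rewrite -/(hform (n.-1)./2 c 1 th) -Hc !mul1r [th * al]mulrC [th * be]mulrC.
Qed.
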